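(* Let $\mathcal O_q$ be the algebra defined in the context, with the degrees and subspaces $\mathcal O_d$ defined there. Then (i) the subspace $\mathcal O_1$ has basis $1,\mathcal W_0,\mathcal W_1$; (ii) for $d\ge2$, $$\mathcal O_d=E_d+\mathcal O_{d-1}+\sum_{k=1}^{d-1}\mathrm{Span}(\mathcal O_k\mathcal O_{d-k}),$$ where $E_d=0$ if $d$ is odd and $E_d=\mathbb F\tilde{\mathcal G}_n$ if $d=2n$ is even.
   Context: All algebras are associative and unital over a field $\mathbb F$; $q\in\mathbb F$ is nonzero and not a root of unity. For elements $X,Y$ of an algebra, $[X,Y]=XY-YX$ and $[X,Y]_q=qXY-q^{-1}YX$. Let $\rho=-(q^2-q^{-2})^2$. The algebra $\mathcal O_q$ is defined by generators (called alternating generators) $\mathcal W_{-k},\mathcal W_{k+1},\mathcal G_{k+1},\tilde{\mathcal G}_{k+1}$ ($k\in\mathbb N$) and the following relations for all $k,\ell\in\mathbb N$: $[\mathcal W_0,\mathcal W_{k+1}]=[\mathcal W_{-k},\mathcal W_1]=(\tilde{\mathcal G}_{k+1}-\mathcal G_{k+1})/(q+q^{-1})$; $[\mathcal W_0,\mathcal G_{k+1}]_q=[\tilde{\mathcal G}_{k+1},\mathcal W_0]_q=\rho\mathcal W_{-k-1}-\rho\mathcal W_{k+1}$; $[\mathcal G_{k+1},\mathcal W_1]_q=[\mathcal W_1,\tilde{\mathcal G}_{k+1}]_q=\rho\mathcal W_{k+2}-\rho\mathcal W_{-k}$; $[\mathcal W_{-k},\mathcal W_{-\ell}]=0$, $[\mathcal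 W_{k+1},\mathcal W_{\ell+1}]=0$; $[\mathcal W_{-k},\mathcal W_{\ell+1}]+[\mathcal W_{k+1},\mathcal W_{-\ell}]=0$; $[\mathcal W_{-k},\mathcal G_{\ell+1}]+[\mathcal G_{k+1},\mathcal W_{-\ell}]=0$; $[\mathcal W_{-k},\tilde{\mathcal G}_{\ell+1}]+[\tilde{\mathcal G}_{k+1},\mathcal W_{-\ell}]=0$; $[\mathcal W_{k+1},\mathcal G_{\ell+1}]+[\mathcal G_{k+1},\mathcal W_{\ell+1}]=0$; $[\mathcal W_{k+1},\tilde{\mathcal G}_{\ell+1}]+[\tilde{\mathcal G}_{k+1},\mathcal W_{\ell+1}]=0$; $[\mathcal G_{k+1},\mathcal G_{\ell+1}]=0$, $[\tilde{\mathcal G}_{k+1},\tilde{\mathcal G}_{\ell+1}]=0$; $[\tilde{\mathcal G}_{k+1},\mathcal G_{\ell+1}]+[\mathcal G_{k+1},\tilde{\mathcal G}_{\ell+1}]=0$. Assign degrees: $\deg\mathcal G_{k+1}=\deg\tilde{\mathcal G}_{k+1}=2k+2$ and $\deg\mathcal W_{-k}=\deg\mathcal W_{k+1}=2k+1$ for $k\in\mathbb N$. For $d\in\mathbb N$, $\mathcal O_d$ is the subspace of $\mathcal O_q$ spanned by all products $a_1a_2\cdots a_n$ ($n\in\mathbb N$, the empty product being $1$) of alternating generators with $\sum_{i=1}^n\deg(a_i)\le d$. *)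

(* Defs.v *)
From HB Require Import structures.
From mathcomp Require Import all_boot all_order all_algebra.
Set Implicit Arguments. Unset Strict Implicit. Unset Printing Implicit Defensive.
Import GRing.Theory.
Local Open Scope ring_scope.

(* Alternating generators:
   GWm k = W_{-k},  GWp k = W_{k+1},  GG k = G_{k+1},  GGt k = ~G_{k+1}  (k : nat) *)
Inductive gen := GWm of nat | GWp of nat | GG of nat | GGt of nat.

Definition gdeg (g : gen) : nat :=
  match g with
  | GWm k | GWp k => (2 * k + 1)%N
  | GG k | GGt k => (2 * k + 2)%N
  end.

Definition wdeg (w : seq gen) : nat := \sum_(g <- w) gdeg g.

Section Alg.
Variables (F : fieldType) (B : algType F).

Definition commr (x y : B) := x * y - y * x.
Definition qcommr (q : F) (x y : B) := q *: (x * y) - q^-1 *: (y * x).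

(* The defining relations of O_q, for elements
   Wm k = W_{-k}, Wp k = W_{k+1}, G k = G_{k+1}, Gt k = ~G_{k+1}. *)
Definition Oq_rel (q : F) (Wm Wp G Gt : nat -> B) : Prop :=
  let rho := - (q ^+ 2 - q ^- 2) ^+ 2 in
  forall k l : nat,
  commr (Wm 0) (Wp k) = (q + q^-1)^-1 *: (Gt k - G k) /\
  commr (Wm k) (Wp 0) = (q + q^-1)^-1 *: (Gt k - G k) /\
  qcommr q (Wm 0) (G k) = rho *: Wm k.+1 - rho *: Wp k /\
  qcommr q (Gt k) (Wm 0) = rho *: Wm k.+1 - rho *: Wp k /\
  qcommr q (G k) (Wp 0) = rho *: Wp k.+1 - rho *: Wm k /\
  qcommr q (Wp 0) (Gt k) = rho *: Wp k.+1 - rho *: Wm k /\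
  commr (Wm k) (Wm l) = 0 /\
  commr (Wp k) (Wp l) = 0 /\
  commr (Wm k) (Wp l) + commr (Wp k) (Wm l) = 0 /\
  commr (Wm k) (G l) + commr (G k) (Wm l) = 0 /\
  commr (Wm k) (Gt l) + commr (Gt k) (Wm l) = 0 /\
  commr (Wp k) (G l) + commr (G k) (Wp l) = 0 /\
  commr (Wp k) (Gt l) + commr (Gt k) (Wp l) = 0 /\
  commr (G k) (G l) = 0 /\
  commr (Gt k) (Gt l) = 0 /\
  commr (Gt k) (G l) + commr (G k) (Gt l) = 0.

Definition geval (Wm Wp G Gt : nat -> B) (g : gen) : B :=
  match g with GWm k => Wm k | GWp k => Wp k | GG k => G k | GGt k => Gt k end.

Definition weval (Wm Wp G Gt : nat -> B) (w : seq gen) : B :=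
  \prod_(g <- w) geval Wm Wp G Gt g.

Definition Span (P : B -> Prop) (x : B) : Prop :=
  exists (n : nat) (c : 'I_n -> F) (v : 'I_n -> B),
    (forall i, P (v i)) /\ x = \sum_(i < n) c i *: v i.

Definition prodset (P Q : B -> Prop) (y : B) : Prop :=
  exists a b, [/\ P a, Q b & y = a * b].

Definition Osub (Wm Wp G Gt : nat -> B) (d : nat) : B -> Prop :=
  Span (fun y => exists w, (wdeg w <= d)%N /\ y = weval Wm Wp G Gt w).

End Alg.

Definition alg_morph (F : fieldType) (A B : algType F) (f : A -> B) : Prop :=
  [/\ forall (a : F) (x y : A), f (a *: x + y) = a *: f x + f y,
      f 1 = 1 &
      forall x y : A, f (x * y) = f x * f y].

(* (A; Wm, Wp, G, Gt) is the algebra O_q presented by the alternating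
   generators and the relations Oq_rel: the relations hold in A, and A
   has the universal property of the presented algebra. *)
Definition is_Oq (F : fieldType) (q : F) (A : algType F)
    (Wm Wp G Gt : nat -> A) : Prop :=
  Oq_rel q Wm Wp G Gt /\
  forall (B : algType F) (Wm' Wp' G' Gt' : nat -> B),
    Oq_rel q Wm' Wp' G' Gt' ->
    exists f : A -> B,
      [/\ alg_morph f,
          (forall k, f (Wm k) = Wm' k /\ f (Wp k) = Wp' k /\
                     f (G k) = G' k /\ f (Gt k) = Gt' k) &
          forall g : A -> B, alg_morph g ->
            (forall k, g (Wm k) = Wm' k /\ g (Wp k) = Wp' k /\
                       g (G k) = G' k /\ g (Gt k) = Gt' k) ->
            forall x, g x = f x].

(* Main.v *)
Require Import Defs.
From mathcomp Require Import all_boot all_order all_algebra.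
From mathcomp Require Import zify.
Import GRing.Theory.
Local Open Scope ring_scope.
Set Implicit Arguments. Unset Strict Implicit.


Definition closedS {F : fieldType} {A : algType F} (S : A -> Prop) :=
  [/\ S 0, (forall x y, S x -> S y -> S (x + y)) & (forall (a : F) x, S x -> S (a *: x))].

Lemma Span_in (F : fieldType) (A : algType F) (P : A -> Prop) x : P x -> Span P x.
Proof.
move=> Px; exists 1%N, (fun _ => 1), (fun _ => x); split=> //.
by rewrite big_ord1 scale1r.
Qed.

Lemma Span_closed (F : fieldType) (A : algType F) (P : A -> Prop) : closedS (Span P).
Proof.
split.
- by exists 0%N, (fun _ => 0), (fun _ => 0); split => [[]|]; rewrite ?big_ord0.
- move=> x y [m [c [v [Pv ->]]]] [n [c' [v' [Pv' ->]]]].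
  exists (m + n)%N, (fun i => match split i with inl j => c j | inr j => c' j end),
    (fun i => match split i with inl j => v j | inr j => v' j end); split.
    by move=> i; case: (split i).
  rewrite big_split_ord /=; congr (_ + _); apply: eq_bigr => i _.
    by rewrite (unsplitK (inl i)).
  by rewrite (unsplitK (inr i)).
- move=> a x [m [c [v [Pv ->]]]].
  exists m, (fun i => a * c i), v; split => //.
  by rewrite scaler_sumr; apply: eq_bigr => i _; rewrite scalerA.
Qed.

Lemma Span_sub (F : fieldType) (A : algType F) (P S : A -> Prop) :
  closedS S -> (forall x, P x -> S x) -> forall x, Span P x -> S x.
Proof.
case=> S0 SD SZ PS x [n [c [v [Pv ->]]]].
elim: n c v Pv => [|n IH] c v Pv; first by rewrite big_ord0.
rewrite big_ord_recr /=; apply: SD; last by apply: SZ; apply: PS.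
exact: (IH (fun i => c (widen_ord (leqnSn n) i)) (fun i => v (widen_ord (leqnSn n) i))).
Qed.

Lemma closed_sum (F : fieldType) (A : algType F) (S : A -> Prop) (I : Type) (r : seq I)
  (Pr : pred I) (f : I -> A) :
  closedS S -> (forall i, Pr i -> S (f i)) -> S (\sum_(i <- r | Pr i) f i).
Proof. by case=> S0 SD SZ H; apply: big_ind. Qed.

Lemma closedN (F : fieldType) (A : algType F) (S : A -> Prop) x :
  closedS S -> S x -> S (- x).
Proof. by case=> _ _ SZ Sx; rewrite -scaleN1r; apply: SZ. Qed.

Lemma closedB (F : fieldType) (A : algType F) (S : A -> Prop) x y :
  closedS S -> S x -> S y -> S (x - y).
Proof. by move=> cS Sx Sy; case: (cS) => _ SD _; apply: SD => //; apply: closedN. Qed.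

Lemma wdeg_cons g w : wdeg (g :: w) = (gdeg g + wdeg w)%N.
Proof. by rewrite /wdeg big_cons. Qed.
Lemma wdeg_cat u v : wdeg (u ++ v) = (wdeg u + wdeg v)%N.
Proof. by rewrite /wdeg big_cat. Qed.
Lemma wdeg_nil : wdeg [::] = 0%N.
Proof. by rewrite /wdeg big_nil. Qed.

Lemma weval_cons (F : fieldType) (A : algType F) (Wm Wp G Gt : nat -> A) g w :
  weval Wm Wp G Gt (g :: w) = geval Wm Wp G Gt g * weval Wm Wp G Gt w.
Proof. by rewrite /weval big_cons. Qed.
Lemma weval_cat (F : fieldType) (A : algType F) (Wm Wp G Gt : nat -> A) u v :
  weval Wm Wp G Gt (u ++ v) = weval Wm Wp G Gt u * weval Wm Wp G Gt v.
Proof. by rewrite /weval big_cat. Qed.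
Lemma weval_nil (F : fieldType) (A : algType F) (Wm Wp G Gt : nat -> A) :
  weval Wm Wp G Gt [::] = 1.
Proof. by rewrite /weval big_nil. Qed.
Lemma weval1 (F : fieldType) (A : algType F) (Wm Wp G Gt : nat -> A) g :
  weval Wm Wp G Gt [:: g] = geval Wm Wp G Gt g.
Proof. by rewrite weval_cons weval_nil mulr1. Qed.

Lemma Osub_closed (F : fieldType) (A : algType F) (Wm Wp G Gt : nat -> A) d :
  closedS (Osub Wm Wp G Gt d).
Proof. exact: Span_closed. Qed.

Lemma Osub_word (F : fieldType) (A : algType F) (Wm Wp G Gt : nat -> A) d w :
  (wdeg w <= d)%N -> Osub Wm Wp G Gt d (weval Wm Wp G Gt w).
Proof. by move=> h; apply: Span_in; exists w. Qed.

Lemma Osub_gen (F : fieldType) (A : algType F) (Wm Wp G Gt : nat -> A) d g :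
  (gdeg g <= d)%N -> Osub Wm Wp G Gt d (geval Wm Wp G Gt g).
Proof. by move=> h; rewrite -weval1; apply: Osub_word; rewrite wdeg_cons wdeg_nil addn0. Qed.

Lemma Osub_mono (F : fieldType) (A : algType F) (Wm Wp G Gt : nat -> A) m n x :
  (m <= n)%N -> Osub Wm Wp G Gt m x -> Osub Wm Wp G Gt n x.
Proof.
move=> mn; apply: Span_sub; first exact: Osub_closed.
by move=> y [w [hw ->]]; apply: Osub_word; apply: leq_trans mn.
Qed.

Lemma Osub_mul (F : fieldType) (A : algType F) (Wm Wp G Gt : nat -> A) m n a b :
  Osub Wm Wp G Gt m a -> Osub Wm Wp G Gt n b -> Osub Wm Wp G Gt (m + n) (a * b).
Proof.
move=> Ha; move: a Ha b; apply: Span_sub.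
  split.
  - by move=> b _; rewrite mul0r; case: (Osub_closed Wm Wp G Gt (m + n)).
  - move=> x y Hx Hy b Hb; rewrite mulrDl.
    by case: (Osub_closed Wm Wp G Gt (m + n)) => _ SD _; apply: SD; auto.
  - move=> c x Hx b Hb; rewrite -scalerAl.
    by case: (Osub_closed Wm Wp G Gt (m + n)) => _ _ SZ; apply: SZ; auto.
move=> a [u [hu ->]]; apply: Span_sub.
  split.
  - by rewrite mulr0; case: (Osub_closed Wm Wp G Gt (m + n)).
  - move=> x y Hx Hy; rewrite mulrDr.
    by case: (Osub_closed Wm Wp G Gt (m + n)) => _ SD _; apply: SD; auto.
  - move=> c x Hx; rewrite -scalerAr.
    by case: (Osub_closed Wm Wp G Gt (m + n)) => _ _ SZ; apply: SZ; auto.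
move=> b [v [hv ->]]; rewrite -weval_cat; apply: Osub_word.
by rewrite wdeg_cat leq_add.
Qed.

Definition Sd (F : fieldType) (A : algType F) (Wm Wp G Gt : nat -> A) (d : nat) (x : A) :=
     exists (e y : A) (z : nat -> A),
       [/\ (if odd d then e = 0 else exists a : F, e = a *: Gt (d./2).-1),
           Osub Wm Wp G Gt d.-1 y,
           (forall k, (1 <= k <= d.-1)%N ->
              Span (prodset (Osub Wm Wp G Gt k) (Osub Wm Wp G Gt (d - k))) (z k)) &
           x = e + y + \sum_(1 <= k < d) z k].

Lemma Sd_closed (F : fieldType) (A : algType F) (Wm Wp G Gt : nat -> A) d :
  closedS (Sd Wm Wp G Gt d).
Proof.
split.
- exists 0, 0, (fun _ => 0); split.
  + by case: ifP => _ //; exists 0; rewrite scale0r.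
  + by case: (Osub_closed Wm Wp G Gt d.-1).
  + by move=> k _; case: (Span_closed (prodset (Osub Wm Wp G Gt k) (Osub Wm Wp G Gt (d - k)))).
  + by rewrite big1 // !addr0.
- move=> x y [e1 [y1 [z1 [He1 Hy1 Hz1 ->]]]] [e2 [y2 [z2 [He2 Hy2 Hz2 ->]]]].
  exists (e1 + e2), (y1 + y2), (fun k => z1 k + z2 k); split.
  + move: He1 He2; case: ifP => _; first by move=> -> ->; rewrite addr0.
    by move=> [a1 ->] [a2 ->]; exists (a1 + a2); rewrite scalerDl.
  + by case: (Osub_closed Wm Wp G Gt d.-1) => _ SD _; apply: SD.
  + move=> k hk; case: (Span_closed (prodset (Osub Wm Wp G Gt k) (Osub Wm Wp G Gt (d - k)))).
    by move=> _ SD _; apply: SD; auto.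
  + by rewrite big_split /= addrACA (addrACA e1 y1 e2 y2).
- move=> a x [e1 [y1 [z1 [He1 Hy1 Hz1 ->]]]].
  exists (a *: e1), (a *: y1), (fun k => a *: z1 k); split.
  + move: He1; case: ifP => _; first by move=> ->; rewrite scaler0.
    by move=> [a1 ->]; exists (a * a1); rewrite scalerA.
  + by case: (Osub_closed Wm Wp G Gt d.-1) => _ _ SZ; apply: SZ.
  + move=> k hk; case: (Span_closed (prodset (Osub Wm Wp G Gt k) (Osub Wm Wp G Gt (d - k)))).
    by move=> _ _ SZ; apply: SZ; auto.
  + by rewrite !scalerDr scaler_sumr.
Qed.

Lemma Sd_E (F : fieldType) (A : algType F) (Wm Wp G Gt : nat -> A) d :
  ~~ odd d -> Sd Wm Wp G Gt d (Gt (d./2).-1).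
Proof.
move=> hd; exists (Gt (d./2).-1), 0, (fun _ => 0); split.
- by rewrite (negbTE hd); exists 1; rewrite scale1r.
- by case: (Osub_closed Wm Wp G Gt d.-1).
- by move=> k _; case: (Span_closed (prodset (Osub Wm Wp G Gt k) (Osub Wm Wp G Gt (d - k)))).
- by rewrite big1 // !addr0.
Qed.

Lemma Sd_Y (F : fieldType) (A : algType F) (Wm Wp G Gt : nat -> A) d y :
  Osub Wm Wp G Gt d.-1 y -> Sd Wm Wp G Gt d y.
Proof.
move=> hy; exists 0, y, (fun _ => 0); split => //.
- by case: ifP => _ //; exists 0; rewrite scale0r.
- by move=> k _; case: (Span_closed (prodset (Osub Wm Wp G Gt k) (Osub Wm Wp G Gt (d - k)))).
- by rewrite big1 // !addr0 add0r.
Qed.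

Lemma Sd_Z (F : fieldType) (A : algType F) (Wm Wp G Gt : nat -> A) d k a b :
  (1 <= k <= d.-1)%N -> Osub Wm Wp G Gt k a -> Osub Wm Wp G Gt (d - k) b ->
  Sd Wm Wp G Gt d (a * b).
Proof.
move=> hk ha hb; exists 0, 0, (fun j => if j == k then a * b else 0); split.
- by case: ifP => _ //; exists 0; rewrite scale0r.
- by case: (Osub_closed Wm Wp G Gt d.-1).
- move=> j _; case: eqP => [->|_].
    by apply: Span_in; exists a, b; split.
  by case: (Span_closed (prodset (Osub Wm Wp G Gt j) (Osub Wm Wp G Gt (d - j)))).
- rewrite -big_mkcond /= big_nat1_eq.
  have -> : (1 <= k < d)%N by lia.
  by rewrite !add0r.
Qed.

Lemma q4_facts (F : fieldType) (q : F) :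
  q != 0 -> (forall n : nat, (0 < n)%N -> q ^+ n != 1) ->
  (- (q ^+ 2 - q ^- 2) ^+ 2 != 0) /\ (q + q^-1 != 0).
Proof.
move=> hq0 hq; have q2 : q ^+ 2 != 0 by rewrite expf_neq0.
split.
- rewrite oppr_eq0 expf_eq0 /= subr_eq0; apply/negP => /eqP h.
  have := hq 4%N isT; rewrite (_ : 4 = 2 + 2)%N // exprD {1}h mulVf //.
  by rewrite eqxx.
- apply/negP => /eqP h.
  have h2 : q ^+ 2 = -1.
    apply/eqP; rewrite -subr_eq0 opprK.
    have : q * (q + q^-1) = 0 by rewrite h mulr0.
    by rewrite mulrDr mulfV // expr2 => ->.
  have := hq 4%N isT; rewrite (_ : 4 = 2 + 2)%N // exprD h2 mulrNN mulr1.
  by rewrite eqxx.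
Qed.

Lemma gdeg_pos g : (0 < gdeg g)%N.
Proof. by case: g => k /=; lia. Qed.

Lemma wdeg_pos g w : (0 < wdeg (g :: w))%N.
Proof. by rewrite wdeg_cons; have := gdeg_pos g; lia. Qed.

Lemma Oq_parts (F : fieldType) (q : F) (A : algType F) (Wm Wp G Gt : nat -> A) :
  Oq_rel q Wm Wp G Gt -> forall k,
  let rho := - (q ^+ 2 - q ^- 2) ^+ 2 in
  [/\ commr (Wm 0%N) (Wp k) = (q + q^-1)^-1 *: (Gt k - G k),
      qcommr q (Wm 0%N) (G k) = rho *: Wm k.+1 - rho *: Wp k &
      qcommr q (G k) (Wp 0%N) = rho *: Wp k.+1 - rho *: Wm k].
Proof.
move=> H k rho; have := H k 0%N.
by case=> [r1 [_ [r3 [_ [r5 _]]]]].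
Qed.

Lemma part2_fwd (F : fieldType) (q : F)
  (hq0 : q != 0) (hq : forall n : nat, (0 < n)%N -> q ^+ n != 1)
  (A : algType F) (Wm Wp G Gt : nat -> A)
  (hR : Oq_rel q Wm Wp G Gt) d : (2 <= d)%N -> forall x,
  Osub Wm Wp G Gt d x -> Sd Wm Wp G Gt d x.
Proof.
move=> hd2 x; apply: Span_sub; first exact: Sd_closed.
have [hrho hqq] := q4_facts hq0 hq.
have cS := Sd_closed Wm Wp G Gt d; case: (cS) => S0 SD SZ.
have SB : forall u v, Sd Wm Wp G Gt d u -> Sd Wm Wp G Gt d v -> Sd Wm Wp G Gt d (u - v).
  by move=> u v; apply: closedB.
have OG : forall n g, (gdeg g <= n)%N -> Osub Wm Wp G Gt n (geval Wm Wp G Gt g).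
  by move=> n g; apply: Osub_gen.
move=> _ [w [hw ->]].
case: (ltnP (wdeg w) d) => h.
  by apply: Sd_Y; apply: Osub_word; lia.
have hd : wdeg w = d by lia.
case: w hw h hd => [|g [|g' w']] hw h hd.
- by rewrite wdeg_nil in hd; lia.
- rewrite weval1; rewrite wdeg_cons wdeg_nil addn0 in hd.
  clear hw h; case: g hd => k /= hd.
  +
    case: k hd => [|k] hd; first lia.
    have [_ r3 _] := Oq_parts hR k.
    set rho := - (q ^+ 2 - q ^- 2) ^+ 2 in r3 hrho.
    have -> : Wm k.+1 = rho^-1 *: (qcommr q (Wm 0%N) (G k) + rho *: Wp k).
      by rewrite r3 subrK scalerA mulVf // scale1r.
    apply: (SZ); apply: (SD); last by apply: (SZ); apply: Sd_Y; apply: ((OG) _ (GWp k)) => /=; lia.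
    rewrite /qcommr; apply: (SB); apply: (SZ).
      apply: (@Sd_Z _ _ _ _ _ _ d 1%N); [lia| apply: ((OG) _ (GWm 0)) => /=; lia|].
      by apply: ((OG) _ (GG k)) => /=; lia.
    apply: (@Sd_Z _ _ _ _ _ _ d d.-1); [lia| apply: ((OG) _ (GG k)) => /=; lia|].
    by apply: ((OG) _ (GWm 0)) => /=; lia.
  +
    case: k hd => [|k] hd; first lia.
    have [_ _ r5] := Oq_parts hR k.
    set rho := - (q ^+ 2 - q ^- 2) ^+ 2 in r5 hrho.
    have -> : Wp k.+1 = rho^-1 *: (qcommr q (G k) (Wp 0%N) + rho *: Wm k).
      by rewrite r5 subrK scalerA mulVf // scale1r.
    apply: (SZ); apply: (SD); last by apply: (SZ); apply: Sd_Y; apply: ((OG) _ (GWm k)) => /=; lia.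
    rewrite /qcommr; apply: (SB); apply: (SZ).
      apply: (@Sd_Z _ _ _ _ _ _ d d.-1); [lia| apply: ((OG) _ (GG k)) => /=; lia|].
      by apply: ((OG) _ (GWp 0)) => /=; lia.
    apply: (@Sd_Z _ _ _ _ _ _ d 1%N); [lia| apply: ((OG) _ (GWp 0)) => /=; lia|].
    by apply: ((OG) _ (GG k)) => /=; lia.
  +
    have [r1 _ _] := Oq_parts hR k.
    have -> : G k = Gt k - (q + q^-1) *: commr (Wm 0%N) (Wp k).
      by rewrite r1 scalerA mulfV // scale1r subKr.
    have hdd : d = (k.+1).*2 by rewrite -muln2; lia.
    apply: (SB).
      by have := @Sd_E _ _ Wm Wp G Gt d; rewrite hdd odd_double doubleK /=; apply.
    rewrite /commr; apply: (SZ); apply: (SB).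
      apply: (@Sd_Z _ _ _ _ _ _ d 1%N); [lia| apply: ((OG) _ (GWm 0)) => /=; lia|].
      by apply: ((OG) _ (GWp k)) => /=; lia.
    apply: (@Sd_Z _ _ _ _ _ _ d d.-1); [lia| apply: ((OG) _ (GWp k)) => /=; lia|].
    by apply: ((OG) _ (GWm 0)) => /=; lia.
  +
    have hdd : d = (k.+1).*2 by rewrite -muln2; lia.
    have := @Sd_E _ _ Wm Wp G Gt d; rewrite hdd odd_double doubleK /=.
    by apply.
- rewrite weval_cons.
  have := gdeg_pos g; have := wdeg_pos g' w'; rewrite wdeg_cons in hd => h1 h2.
  apply: (@Sd_Z _ _ _ _ _ _ d (gdeg g)); first lia.
    exact: (OG).
  by apply: Osub_word; lia.
Qed.

Lemma part2_bwd (F : fieldType) (A : algType F) (Wm Wp G Gt : nat -> A) d :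
  (2 <= d)%N -> forall x, Sd Wm Wp G Gt d x -> Osub Wm Wp G Gt d x.
Proof.
move=> hd2 x [e [y [z [He Hy Hz ->]]]].
have cO := Osub_closed Wm Wp G Gt d; case: (cO) => O0 OD OZ.
apply: (OD); first apply: (OD).
- move: He; case: ifP => hodd; first by move=> ->.
  move=> [a ->]; apply: (OZ).
  have := odd_double_half d; rewrite hodd add0n -muln2 => hh.
  by apply: (@Osub_gen _ _ _ _ _ _ _ (GGt (d./2).-1)) => /=; lia.
- by apply: (@Osub_mono _ _ _ _ _ _ d.-1) => //; lia.
- rewrite big_nat_cond; apply: closed_sum => // i /andP [/andP [h1 h2] _].
  have hi : (1 <= i <= d.-1)%N by lia.
  apply: (Span_sub cO _ (Hz i hi)).
  move=> _ [a [b [ha hb ->]]].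
  have := Osub_mul ha hb; rewrite subnKC //; lia.
Qed.

Lemma part1_span (F : fieldType) (A : algType F) (Wm Wp G Gt : nat -> A) x :
  Osub Wm Wp G Gt 1 x <->
      exists a b c : F, x = a *: 1 + b *: Wm 0%N + c *: Wp 0%N.
Proof.
split.
- apply: (@Span_sub _ _ _ (fun x => exists a b c : F, x = a *: 1 + b *: Wm 0%N + c *: Wp 0%N)).
    split.
    + by exists 0, 0, 0; rewrite !scale0r !addr0.
    + move=> u v [a [b [c ->]]] [a' [b' [c' ->]]].
      exists (a + a'), (b + b'), (c + c'); rewrite !scalerDl.
      by rewrite (addrACA (a *: 1 + _)) (addrACA (a *: 1)).
    + move=> s u [a [b [c ->]]]; exists (s * a), (s * b), (s * c).
      by rewrite !scalerDr !scalerA.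
  move=> _ [w [hw ->]].
  case: w hw => [|g [|g' w']] hw.
  + by exists 1, 0, 0; rewrite weval_nil scale1r !scale0r !addr0.
  + rewrite weval1; rewrite wdeg_cons wdeg_nil addn0 in hw.
    case: g hw => [[|k]|[|k]|k|k] /= hw; try lia.
      by exists 0, 1, 0; rewrite scale0r scale1r scale0r add0r addr0.
    by exists 0, 0, 1; rewrite !scale0r scale1r !add0r.
  + have := gdeg_pos g; have := wdeg_pos g' w'; rewrite wdeg_cons in hw; lia.
- move=> [a [b [c ->]]].
  have cO := Osub_closed Wm Wp G Gt 1; case: (cO) => O0 OD OZ.
  apply: (OD); first apply: (OD); apply: (OZ).
  + by rewrite -(weval_nil Wm Wp G Gt); apply: Osub_word; rewrite wdeg_nil.
  + by apply: (@Osub_gen _ _ _ _ _ _ _ (GWm 0)).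
  + by apply: (@Osub_gen _ _ _ _ _ _ _ (GWp 0)).
Qed.

Lemma part1_indep (F : fieldType) (q : F) (A : algType F) (Wm Wp G Gt : nat -> A)
  (hA : is_Oq q Wm Wp G Gt) :
  forall a b c : F, a *: 1 + b *: Wm 0%N + c *: Wp 0%N = 0 ->
      [/\ a = 0, b = 0 & c = 0].
Proof.
case: hA => _ hU a b c habc.
pose Wm' := fun k : nat => if odd k then ('X^2 : {poly F}) else 'X.
pose Wp' := fun k : nat => if odd k then ('X : {poly F}) else 'X^2.
pose G0 := fun _ : nat => (0 : {poly F}).
have hR : Oq_rel q Wm' Wp' G0 G0.
  have cm : forall x y : {poly F}, x * y - y * x = 0 by move=> x y; rewrite mulrC subrr.
  move=> k l; rewrite /commr /qcommr /G0 !mulr0 !mul0r !scaler0 !subrr !scaler0.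
  rewrite !cm !addr0 ?scaler0.
  rewrite /Wm' /Wp' /=; case: (odd k); rewrite /= !subrr; do 15 split => //.
have [f [[fl f1 fm] fgen _]] := hU _ _ _ _ _ hR.
have f0 : f 0 = 0.
  have h := fl 1 0 0; rewrite !scale1r addr0 in h.
  by apply: (addrI (f 0)); rewrite addr0 -h.
have fD : forall x y, f (x + y) = f x + f y.
  by move=> x y; rewrite -{1}(scale1r x) fl scale1r.
have fZ : forall (s : F) x, f (s *: x) = s *: f x.
  by move=> s x; rewrite -(addr0 (s *: x)) fl f0 addr0.
have := congr1 f habc; rewrite f0 !fD !fZ f1.
have [-> _] := fgen 0%N; have [_ [-> _]] := fgen 0%N.
rewrite /Wm' /Wp' /= => h.
have c0 := congr1 (fun p : {poly F} => p`_0) h.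
have c1 := congr1 (fun p : {poly F} => p`_1) h.
have c2 := congr1 (fun p : {poly F} => p`_2) h.
move: c0 c1 c2; rewrite /= !coefD !coefZ !coef1 !coefX !coefXn /=.
by rewrite ?mulr0 ?mulr1 ?addr0 ?add0r !coef0 => -> -> ->.
Qed.

Unset Implicit Arguments. Set Strict Implicit.

Theorem lemma7p4 (F : fieldType) (q : F)
  (hq0 : q != 0) (hq : forall n : nat, (0 < n)%N -> q ^+ n != 1)
  (A : algType F) (Wm Wp G Gt : nat -> A)
  (hA : is_Oq q Wm Wp G Gt) :
  (* (i) 1, W_0, W_1 is a basis of O_1 *)
  ((forall x : A, Osub Wm Wp G Gt 1 x <->
      exists a b c : F, x = a *: 1 + b *: Wm 0%N + c *: Wp 0%N) /\
   (forall a b c : F, a *: 1 + b *: Wm 0%N + c *: Wp 0%N = 0 ->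
      [/\ a = 0, b = 0 & c = 0])) /\
  (* (ii) O_d = E_d + O_{d-1} + sum_{k=1}^{d-1} Span(O_k O_{d-k}) for d >= 2 *)
  (forall d : nat, (2 <= d)%N -> forall x : A,
     Osub Wm Wp G Gt d x <->
     exists (e y : A) (z : nat -> A),
       [/\ (if odd d then e = 0 else exists a : F, e = a *: Gt (d./2).-1),
           Osub Wm Wp G Gt d.-1 y,
           (forall k, (1 <= k <= d.-1)%N ->
              Span (prodset (Osub Wm Wp G Gt k) (Osub Wm Wp G Gt (d - k))) (z k)) &
           x = e + y + \sum_(1 <= k < d) z k]).
Proof.
split; first split.
- exact: part1_span.
- exact: (part1_indep hA).
- move=> d hd x; split.
  + exact: (part2_fwd hq0 hq hA.1 hd).
  + exact: part2_bwd.
Qed.
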